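(* Let $1\le i,j,a\le n$ with $i<j$. Then in ${\boldsymbol U}_{v}(\mathfrak q_n)$: \[ \mathsf K_{\bar a}\mathsf E_{i,j}=\begin{cases}\mathsf E_{i,j}\mathsf K_{\bar a} & (a<i\text{ or } i<a<j\text{ or }a>j),\\ v\mathsf E_{i,j}\mathsf K_{\bar i}-\mathsf E_{\bar i}\mathsf E_{i+1,j}\mathsf K_i^{-1}+v^{-1}\mathsf E_{i+1,j}\mathsf E_{\bar i}\mathsf K_i^{-1} & (a=i,\ j>i+1),\\ v^{-1}\mathsf E_{i,j}\mathsf K_{\bar j}-\overline{\mathsf E}_{i,j}\mathsf K_j^{-1} & (a=j);\end{cases} \] \[ \mathsf K_{\bar a}\overline{\mathsf E}_{i,j}=\begin{cases}-\overline{\mathsf E}_{i,j}\mathsf K_{\bar a} & (a<i\text{ or } i<a<j\text{ or }a>j),\\ -v\overline{\mathsf E}_{i,j}\mathsf K_{\bar i}-\mathsf E_{\bar i}\overline{\mathsf E}_{i+1,j}\mathsf K_i^{-1}-v^{-1}\overline{\mathsf E}_{i+1,j}\mathsf E_{\bar i}\mathsf K_i^{-1} & (a=i,\ j>i+1),\\ -v^{-1}\overline{\mathsf E}_{i,j}\mathsf K_{\bar j}+\mathsf E_{i,j}\mathsf K_j^{-1} & (a=j).\end{cases} \]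
   Context: Let $v$ be an indeterminate. The quantum queer superalgebra ${\boldsymbol U}_{v}(\mathfrak q_n)$ is the associative superalgebra over $\mathbb Q(v)$ generated by even generators $\mathsf K_i,\mathsf K_i^{-1}$ ($1\le i\le n$), $\mathsf E_j,\mathsf F_j$ ($1\le j\le n-1$) and odd generators $\mathsf K_{\bar i}$ ($1\le i\le n$), $\mathsf E_{\bar j},\mathsf F_{\bar j}$ ($1\le j\le n-1$), subject to the following relations (indices are taken only where they make sense), where $(\epsilon_i,\alpha_j)=\delta_{i,j}-\delta_{i,j+1}$: (QQ1) $\mathsf K_i\mathsf K_i^{-1}=\mathsf K_i^{-1}\mathsf K_i=1$, $\mathsf K_i\mathsf K_j=\mathsf K_j\mathsf K_i$, $\mathsf K_i\mathsf K_{\bar j}=\mathsf K_{\bar j}\mathsf K_i$, $\mathsf K_{\bar i}\mathsf K_{\bar j}+\mathsf K_{\bar j}\mathsf K_{\bar i}=2\delta_{i,j}\frac{\mathsf K_i^2-\mathsf K_i^{-2}}{v^2-v^{-2}}$. (QQ2) $\mathsf K_i\mathsf E_j=v^{(\epsilon_i,\alpha_j)}\mathsf E_j\mathsf K_i$, $\mathsf K_i\mathsf E_{\bar j}=v^{(\epsilon_i,\alpha_j)}\mathsf E_{\bar j}\mathsf K_i$, $\mathsf K_i\mathsf F_j=v^{-(\epsilon_i,\alpha_j)}\mathsf F_j\mathsf K_i$, $\mathsf K_i\mathsf F_{\bar j}=v^{-(\epsilon_i,\alpha_j)}\mathsf F_{\bar j}\mathsf K_i$. (QQ3) $\mathsf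 K_{\bar i}\mathsf E_i-v\mathsf E_i\mathsf K_{\bar i}=\mathsf E_{\bar i}\mathsf K_i^{-1}$, $v\mathsf K_{\bar i}\mathsf E_{i-1}-\mathsf E_{i-1}\mathsf K_{\bar i}=-\mathsf K_i^{-1}\mathsf E_{\overline{i-1}}$, $\mathsf K_{\bar i}\mathsf F_i-v\mathsf F_i\mathsf K_{\bar i}=-\mathsf F_{\bar i}\mathsf K_i$, $v\mathsf K_{\bar i}\mathsf F_{i-1}-\mathsf F_{i-1}\mathsf K_{\bar i}=\mathsf K_i\mathsf F_{\overline{i-1}}$, $\mathsf K_{\bar i}\mathsf E_{\bar i}+v\mathsf E_{\bar i}\mathsf K_{\bar i}=\mathsf E_i\mathsf K_i^{-1}$, $v\mathsf K_{\bar i}\mathsf E_{\overline{i-1}}+\mathsf E_{\overline{i-1}}\mathsf K_{\bar i}=\mathsf K_i^{-1}\mathsf E_{i-1}$, $\mathsf K_{\bar i}\mathsf F_{\bar i}+v\mathsf F_{\bar i}\mathsf K_{\bar i}=\mathsf F_i\mathsf K_i$, $v\mathsf K_{\bar i}\mathsf F_{\overline{i-1}}+\mathsf F_{\overline{i-1}}\mathsf K_{\bar i}=\mathsf K_i\mathsf F_{i-1}$, and for $j\ne i,i-1$: $\mathsf K_{\bar i}\mathsf E_j=\mathsf E_j\mathsf K_{\bar i}$, $\mathsf K_{\bar i}\mathsf F_j=\mathsf F_j\mathsf K_{\bar i}$, $\mathsf K_{\bar i}\mathsf E_{\bar j}=-\mathsf E_{\bar j}\mathsf K_{\bar i}$,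 $\mathsf K_{\bar i}\mathsf F_{\bar j}=-\mathsf F_{\bar j}\mathsf K_{\bar i}$. (QQ4) $\mathsf E_i\mathsf F_j-\mathsf F_j\mathsf E_i=\delta_{i,j}\frac{\mathsf K_i\mathsf K_{i+1}^{-1}-\mathsf K_i^{-1}\mathsf K_{i+1}}{v-v^{-1}}$, $\mathsf E_{\bar i}\mathsf F_{\bar j}+\mathsf F_{\bar j}\mathsf E_{\bar i}=\delta_{i,j}\big(\frac{\mathsf K_i\mathsf K_{i+1}-\mathsf K_i^{-1}\mathsf K_{i+1}^{-1}}{v-v^{-1}}+(v-v^{-1})\mathsf K_{\bar i}\mathsf K_{\overline{i+1}}\big)$, $\mathsf E_i\mathsf F_{\bar j}-\mathsf F_{\bar j}\mathsf E_i=\delta_{i,j}(\mathsf K_{i+1}^{-1}\mathsf K_{\bar i}-\mathsf K_{\overline{i+1}}\mathsf K_i^{-1})$, $\mathsf E_{\bar i}\mathsf F_j-\mathsf F_j\mathsf E_{\bar i}=\delta_{i,j}(\mathsf K_{i+1}\mathsf K_{\bar i}-\mathsf K_{\overline{i+1}}\mathsf K_i)$. (QQ5) $\mathsf E_{\bar i}^2=-\frac{v-v^{-1}}{v+v^{-1}}\mathsf E_i^2$, $\mathsf F_{\bar i}^2=\frac{v-v^{-1}}{v+v^{-1}}\mathsf F_i^2$; for $|i-j|\ne1$: $\mathsf E_i\mathsf E_{\bar j}=\mathsf E_{\bar j}\mathsf E_i$, $\mathsf F_i\mathsf F_{\bar j}=\mathsf F_{\bar j}\mathsf F_i$; for $|i-j|>1$: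 $\mathsf E_i\mathsf E_j=\mathsf E_j\mathsf E_i$, $\mathsf F_i\mathsf F_j=\mathsf F_j\mathsf F_i$, $\mathsf E_{\bar i}\mathsf E_{\bar j}=-\mathsf E_{\bar j}\mathsf E_{\bar i}$, $\mathsf F_{\bar i}\mathsf F_{\bar j}=-\mathsf F_{\bar j}\mathsf F_{\bar i}$; $\mathsf E_i\mathsf E_{i+1}-v\mathsf E_{i+1}\mathsf E_i=\mathsf E_{\bar i}\mathsf E_{\overline{i+1}}+v\mathsf E_{\overline{i+1}}\mathsf E_{\bar i}$, $\mathsf E_i\mathsf E_{\overline{i+1}}-v\mathsf E_{\overline{i+1}}\mathsf E_i=\mathsf E_{\bar i}\mathsf E_{i+1}-v\mathsf E_{i+1}\mathsf E_{\bar i}$, $\mathsf F_i\mathsf F_{i+1}-v\mathsf F_{i+1}\mathsf F_i=-(\mathsf F_{\bar i}\mathsf F_{\overline{i+1}}+v\mathsf F_{\overline{i+1}}\mathsf F_{\bar i})$, $\mathsf F_i\mathsf F_{\overline{i+1}}-v\mathsf F_{\overline{i+1}}\mathsf F_i=\mathsf F_{\bar i}\mathsf F_{i+1}-v\mathsf F_{i+1}\mathsf F_{\bar i}$. (QQ6) for $|i-j|=1$: $\mathsf E_i^2X-(v+v^{-1})\mathsf E_iX\mathsf E_i+X\mathsf E_i^2=0$ for $X\in\{\mathsf E_j,\mathsf E_{\bar j}\}$ and $\mathsf F_i^2Y-(v+v^{-1})\mathsf F_iY\mathsf F_i+Y\mathsf F_i^2=0$ for $Y\in\{\mathsf F_j,\mathsf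 F_{\bar j}\}$. Quantum root vectors: for $1\le i\le n-1$ put $\mathsf E_{i,i+1}=\mathsf E_i$, $\overline{\mathsf E}_{i,i+1}=\mathsf E_{\bar i}$, $\mathsf E_{i+1,i}=\mathsf F_i$, $\overline{\mathsf E}_{i+1,i}=\mathsf F_{\bar i}$, and recursively for $i+1<j\le n$: $\mathsf E_{i,j}=-\mathsf E_{i,j-1}\mathsf E_{j-1}+v^{-1}\mathsf E_{j-1}\mathsf E_{i,j-1}$, $\overline{\mathsf E}_{i,j}=-\mathsf E_{i,j-1}\mathsf E_{\overline{j-1}}+v^{-1}\mathsf E_{\overline{j-1}}\mathsf E_{i,j-1}$, $\mathsf E_{j,i}=-\mathsf F_{j-1}\mathsf E_{j-1,i}+v\mathsf E_{j-1,i}\mathsf F_{j-1}$, $\overline{\mathsf E}_{j,i}=-\mathsf F_{\overline{j-1}}\mathsf E_{j-1,i}+v\mathsf E_{j-1,i}\mathsf F_{\overline{j-1}}$. *)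

(* Defs.v *)
From HB Require Import structures.
From mathcomp Require Import all_boot all_order all_algebra fraction.
Set Implicit Arguments. Unset Strict Implicit. Unset Printing Implicit Defensive.
Import Order.TTheory GRing.Theory Num.Theory.
Local Open Scope ring_scope.

Definition Qv : fieldType := {fraction {poly rat}}.
Definition qv : Qv := @FracField.tofrac _ ('X : {poly rat}).

(* (eps_i, alpha_j) = delta_{i,j} - delta_{i,j+1} *)
Definition epsal (i j : nat) : int := (i == j)%:Z - (i == j.+1)%:Z.

Section Rels.
Variable A : algType Qv.
Variable n : nat.
Variables (K Ki Kb E Eb F Fb : nat -> A).
(* K i = K_i, Ki i = K_i^{-1}, Kb i = K_{bar i}, E j = E_j, Eb j = E_{bar j},
   F j = F_j, Fb j = F_{bar j}. Indices are 1-based: K for 1<=i<=n, E,F for 1<=j<=n-1. *)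

Record qqn_rels : Prop := QQRels {
 qq1_inv : forall i, (1 <= i <= n)%N -> K i * Ki i = 1 /\ Ki i * K i = 1;
 qq1_KK : forall i j, (1 <= i <= n)%N -> (1 <= j <= n)%N -> K i * K j = K j * K i;
 qq1_KKb : forall i j, (1 <= i <= n)%N -> (1 <= j <= n)%N -> K i * Kb j = Kb j * K i;
 qq1_KbKb : forall i j, (1 <= i <= n)%N -> (1 <= j <= n)%N ->
   Kb i * Kb j + Kb j * Kb i
   = ((i == j)%:R *+ 2 * (qv ^+ 2 - qv ^- 2)^-1) *: (K i ^+ 2 - Ki i ^+ 2);
 qq2_E : forall i j, (1 <= i <= n)%N -> (1 <= j <= n.-1)%N ->
   K i * E j = qv ^ epsal i j *: (E j * K i);
 qq2_Eb : forall i j, (1 <= i <= n)%N -> (1 <= j <= n.-1)%N ->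
   K i * Eb j = qv ^ epsal i j *: (Eb j * K i);
 qq2_F : forall i j, (1 <= i <= n)%N -> (1 <= j <= n.-1)%N ->
   K i * F j = qv ^ (- epsal i j) *: (F j * K i);
 qq2_Fb : forall i j, (1 <= i <= n)%N -> (1 <= j <= n.-1)%N ->
   K i * Fb j = qv ^ (- epsal i j) *: (Fb j * K i);
 qq3_1 : forall i, (1 <= i <= n.-1)%N -> Kb i * E i - qv *: (E i * Kb i) = Eb i * Ki i;
 qq3_2 : forall i, (2 <= i <= n)%N ->
   qv *: (Kb i * E i.-1) - E i.-1 * Kb i = - (Ki i * Eb i.-1);
 qq3_3 : forall i, (1 <= i <= n.-1)%N -> Kb i * F i - qv *: (F i * Kb i) = - (Fb i * K i);
 qq3_4 : forall i, (2 <= i <= n)%N ->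
   qv *: (Kb i * F i.-1) - F i.-1 * Kb i = K i * Fb i.-1;
 qq3_5 : forall i, (1 <= i <= n.-1)%N -> Kb i * Eb i + qv *: (Eb i * Kb i) = E i * Ki i;
 qq3_6 : forall i, (2 <= i <= n)%N ->
   qv *: (Kb i * Eb i.-1) + Eb i.-1 * Kb i = Ki i * E i.-1;
 qq3_7 : forall i, (1 <= i <= n.-1)%N -> Kb i * Fb i + qv *: (Fb i * Kb i) = F i * K i;
 qq3_8 : forall i, (2 <= i <= n)%N ->
   qv *: (Kb i * Fb i.-1) + Fb i.-1 * Kb i = K i * F i.-1;
 qq3_9 : forall i j, (1 <= i <= n)%N -> (1 <= j <= n.-1)%N -> j != i -> j.+1 != i ->
   [/\ Kb i * E j = E j * Kb i, Kb i * F j = F j * Kb i,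
       Kb i * Eb j = - (Eb j * Kb i) & Kb i * Fb j = - (Fb j * Kb i)];
 qq4_1 : forall i j, (1 <= i <= n.-1)%N -> (1 <= j <= n.-1)%N ->
   E i * F j - F j * E i
   = (i == j)%:R *: ((qv - qv^-1)^-1 *: (K i * Ki i.+1 - Ki i * K i.+1));
 qq4_2 : forall i j, (1 <= i <= n.-1)%N -> (1 <= j <= n.-1)%N ->
   Eb i * Fb j + Fb j * Eb i
   = (i == j)%:R *: ((qv - qv^-1)^-1 *: (K i * K i.+1 - Ki i * Ki i.+1)
                     + (qv - qv^-1) *: (Kb i * Kb i.+1));
 qq4_3 : forall i j, (1 <= i <= n.-1)%N -> (1 <= j <= n.-1)%N ->
   E i * Fb j - Fb j * E i = (i == j)%:R *: (Ki i.+1 * Kb i - Kb i.+1 * Ki i);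
 qq4_4 : forall i j, (1 <= i <= n.-1)%N -> (1 <= j <= n.-1)%N ->
   Eb i * F j - F j * Eb i = (i == j)%:R *: (K i.+1 * Kb i - Kb i.+1 * K i);
 qq5_Eb2 : forall i, (1 <= i <= n.-1)%N ->
   Eb i ^+ 2 = - ((qv - qv^-1) / (qv + qv^-1)) *: E i ^+ 2;
 qq5_Fb2 : forall i, (1 <= i <= n.-1)%N ->
   Fb i ^+ 2 = ((qv - qv^-1) / (qv + qv^-1)) *: F i ^+ 2;
 qq5_EEb : forall i j, (1 <= i <= n.-1)%N -> (1 <= j <= n.-1)%N ->
   i != j.+1 -> j != i.+1 -> E i * Eb j = Eb j * E i /\ F i * Fb j = Fb j * F i;
 qq5_far : forall i j, (1 <= i <= n.-1)%N -> (1 <= j <= n.-1)%N ->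
   (i.+1 < j)%N || (j.+1 < i)%N ->
   [/\ E i * E j = E j * E i, F i * F j = F j * F i,
       Eb i * Eb j = - (Eb j * Eb i) & Fb i * Fb j = - (Fb j * Fb i)];
 qq5_1 : forall i, (1 <= i)%N -> (i.+1 <= n.-1)%N ->
   E i * E i.+1 - qv *: (E i.+1 * E i) = Eb i * Eb i.+1 + qv *: (Eb i.+1 * Eb i);
 qq5_2 : forall i, (1 <= i)%N -> (i.+1 <= n.-1)%N ->
   E i * Eb i.+1 - qv *: (Eb i.+1 * E i) = Eb i * E i.+1 - qv *: (E i.+1 * Eb i);
 qq5_3 : forall i, (1 <= i)%N -> (i.+1 <= n.-1)%N ->
   F i * F i.+1 - qv *: (F i.+1 * F i) = - (Fb i * Fb i.+1 + qv *: (Fb i.+1 * Fb i));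
 qq5_4 : forall i, (1 <= i)%N -> (i.+1 <= n.-1)%N ->
   F i * Fb i.+1 - qv *: (Fb i.+1 * F i) = Fb i * F i.+1 - qv *: (F i.+1 * Fb i);
 qq6_E : forall i j, (1 <= i <= n.-1)%N -> (1 <= j <= n.-1)%N ->
   (i == j.+1) || (j == i.+1) ->
   forall X, (X = E j \/ X = Eb j) ->
   E i ^+ 2 * X - (qv + qv^-1) *: (E i * X * E i) + X * E i ^+ 2 = 0;
 qq6_F : forall i j, (1 <= i <= n.-1)%N -> (1 <= j <= n.-1)%N ->
   (i == j.+1) || (j == i.+1) ->
   forall Y, (Y = F j \/ Y = Fb j) ->
   F i ^+ 2 * Y - (qv + qv^-1) *: (F i * Y * F i) + Y * F i ^+ 2 = 0
}.

(* Quantum root vectors E_{i,i+1+k} and bar E_{i,i+1+k}. *)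
Fixpoint Eroot (i k : nat) : A :=
  match k with
  | 0 => E i
  | k'.+1 => - (Eroot i k' * E (i + k)) + qv^-1 *: (E (i + k) * Eroot i k')
  end.

Fixpoint Ebroot (i k : nat) : A :=
  match k with
  | 0 => Eb i
  | k'.+1 => - (Eroot i k' * Eb (i + k)) + qv^-1 *: (Eb (i + k) * Eroot i k')
  end.

Definition Eij (i j : nat) : A := Eroot i (j - i).-1.
Definition Ebij (i j : nat) : A := Ebroot i (j - i).-1.

End Rels.

(* Main.v *)
Require Import Defs.
From HB Require Import structures.
From mathcomp Require Import all_boot all_order all_algebra.
From mathcomp Require Import fraction ring zify.
Import Order.TTheory GRing.Theory Num.Theory.
Set Implicit Arguments. Unset Strict Implicit. Unset Printing Implicit Defensive.
Local Open Scope ring_scope.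

Section Lin.
Variable R : comRingType.
Variable V : lmodType R.

Inductive lexpr := LAtom of nat | LScale of R & lexpr | LAdd of lexpr & lexpr
  | LOpp of lexpr | LZero.

Fixpoint leval (env : seq V) e : V :=
  match e with
  | LAtom i => nth 0 env i
  | LScale c e => c *: leval env e
  | LAdd a b => leval env a + leval env b
  | LOpp a => - leval env a
  | LZero => 0
  end.

Fixpoint lcoef e (i : nat) : R :=
  match e with
  | LAtom j => if eqn i j then 1 else 0
  | LScale c e => c * lcoef e i
  | LAdd a b => lcoef a i + lcoef b i
  | LOpp a => - lcoef a i
  | LZero => 0
  end.

Lemma leval_sum env e :
  leval env e = \sum_(i < size env) lcoef e i *: nth 0 env i.
Proof.
elim: e => [j|c e IH|a IHa b IHb|a IH|] /=.
- rewrite [in RHS](eq_bigr (fun i : 'I_(size env) => (if (i == j :> nat) then 1 else 0) *: env`_i)); last by move=> i _; rewrite eqnE.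
  case: (ltnP j (size env)) => hj.
  + rewrite (bigD1 (Ordinal hj)) //= eqxx scale1r big1 ?addr0 //.
    move=> i /eqP hi; case: eqP => [e|]; last by rewrite scale0r.
    by case: hi; apply: val_inj; rewrite /= e.
  + rewrite nth_default // big1 // => i _.
    case: eqP => [e|]; last by rewrite scale0r.
    by move: (ltn_ord i); rewrite e ltnNge hj.
- by rewrite IH scaler_sumr; apply: eq_bigr => i _; rewrite scalerA.
- by rewrite IHa IHb -big_split /=; apply: eq_bigr => i _; rewrite scalerDl.
- by rewrite IH -sumrN; apply: eq_bigr => i _; rewrite scaleNr.
- by rewrite big1 // => i _; rewrite scale0r.
Qed.

Fixpoint allcoef (e1 e2 : lexpr) (l : seq nat) : Prop :=
  match l with
  | [::] => True
  | i :: l' => lcoef e1 i = lcoef e2 i /\ allcoef e1 e2 l'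
  end.

Lemma lsound env e1 e2 : allcoef e1 e2 (iota 0 (size env)) ->
  leval env e1 = leval env e2.
Proof.
move=> h; rewrite !leval_sum; apply: eq_bigr => i _.
suff -> : lcoef e1 i = lcoef e2 i by [].
have : (i : nat) \in iota 0 (size env) by rewrite mem_iota /=.
elim: (iota 0 (size env)) h => //= a l IH [ha hl].
by rewrite in_cons => /orP [/eqP -> //|]; apply: IH.
Qed.

End Lin.

Ltac lmem x l :=
  match l with
  | nil => constr:(false)
  | ?y :: _ => let _ := match goal with _ => unify x y end in constr:(true)
  | _ :: ?l' => lmem x l'
  end.

Ltac lcollect t l :=
  lazymatch t with
  | GRing.add ?a ?b => let l1 := lcollect a l in lcollect b l1
  | GRing.opp ?a => lcollect a l
  | GRing.scale ?c ?a => lcollect a l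
  | GRing.zero => l
  | _ => let b := lmem t l in
         lazymatch b with
         | true => l
         | false => constr:(t :: l)
         end
  end.

Ltac lidx x l n :=
  match l with
  | ?y :: _ => let _ := match goal with _ => unify x y end in constr:(n)
  | _ :: ?l' => lidx x l' (S n)
  end.

Ltac lreify R t l :=
  lazymatch t with
  | GRing.add ?a ?b => let ea := lreify R a l in let eb := lreify R b l in
                       constr:(@LAdd R ea eb)
  | GRing.opp ?a => let ea := lreify R a l in constr:(@LOpp R ea)
  | GRing.scale ?c ?a => let ea := lreify R a l in constr:(@LScale R c ea)
  | GRing.zero => constr:(@LZero R)
  | _ => let i := lidx t l O in constr:(@LAtom R i)
  end.

Ltac lin_solve R V :=
  lazymatch goal with
  | |- ?L = ?Rh =>
    let l0 := lcollect L (@nil V) in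
    let l := lcollect Rh l0 in
    let eL := lreify R L l in
    let eR := lreify R Rh l in
    change (@leval R V l eL = @leval R V l eR);
    apply: lsound; cbn [allcoef lcoef iota size eqn]; repeat split
  end.



Lemma qv_neq0 : qv != 0.
Proof. by rewrite /qv tofrac_eq0 polyX_eq0. Qed.

Section Gen.
Variable F : fieldType.
Variable v : F.
Hypothesis v0 : v != 0.
Variable A : algType F.
Local Notation w := (v^-1).

Lemma scalerAlE (k : F) (x y : A) : k *: x * y = k *: (x * y).
Proof. by rewrite scalerAl. Qed.
Lemma scalerArE (k : F) (x y : A) : x * (k *: y) = k *: (x * y).
Proof. by rewrite scalerAr. Qed.

Ltac nrm := rewrite ?(mulrDl, mulrDr, mulrN, mulNr, mulr0, mul0r, scalerAlE, scalerArE, mulrA, scale0r, scaler0, addr0, add0r, mul1r, mulr1).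
Ltac cf := first [ring | (field; exact: v0) | field].
Ltac lin := lin_solve F A; cf.

Definition T (x y : A) := - (x * y) + w *: (y * x).

Lemma LeibM (kb x y P Q : A) (p q : F) :
  kb * x = p *: (x * kb) + P -> kb * y = q *: (y * kb) + Q ->
  kb * (x * y) = (p * q) *: (x * y * kb) + (p *: (x * Q) + P * y).
Proof.
move=> hx hy; rewrite mulrA hx mulrDl -scalerAl -[x * kb * y]mulrA hy.
nrm; lin.
Qed.

Lemma LeibT (kb x y P Q : A) (p q : F) :
  kb * x = p *: (x * kb) + P -> kb * y = q *: (y * kb) + Q ->
  kb * T x y = (p * q) *: (T x y * kb) + (w *: (q *: (y * P) + Q * x) - (p *: (x * Q) + P * y)).
Proof.
move=> hx hy; rewrite /T mulrDr mulrN -scalerAr (LeibM hx hy) (LeibM hy hx).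
nrm; lin.
Qed.

Lemma G_comm (kb x e : A) (c d : F) :
  kb * x = c *: (x * kb) -> kb * e = d *: (e * kb) -> kb * T x e = (c * d) *: (T x e * kb).
Proof.
move=> hx he; have hx' : kb * x = c *: (x * kb) + 0 by rewrite addr0.
have he' : kb * e = d *: (e * kb) + 0 by rewrite addr0.
rewrite (LeibT hx' he'); nrm; lin.
Qed.

Lemma stepJ (kb ki x e eb : A) :
  kb * x = x * kb -> ki * x = x * ki -> kb * e = w *: (e * kb) - eb * ki ->
  kb * T x e = w *: (T x e * kb) - T x eb * ki.
Proof.
move=> hx hk he; have hx' : kb * x = 1 *: (x * kb) + 0 by rewrite addr0 scale1r.
rewrite (LeibT hx' he) /T; nrm.
rewrite -[eb * ki * x]mulrA hk mulrA; lin.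
Qed.

Lemma stepJb (kb ki x e eb : A) :
  kb * x = x * kb -> ki * x = x * ki -> kb * eb = - (w *: (eb * kb)) + e * ki ->
  kb * T x eb = - (w *: (T x eb * kb)) + T x e * ki.
Proof.
move=> hx hk he; have hx' : kb * x = 1 *: (x * kb) + 0 by rewrite addr0 scale1r.
have he' : kb * eb = (- w) *: (eb * kb) + e * ki by rewrite scaleNr.
rewrite (LeibT hx' he') /T; nrm.
rewrite -[e * ki * x]mulrA hk mulrA; lin.
Qed.

Lemma baseI (kb ki e e1 eb : A) :
  kb * e = v *: (e * kb) + eb * ki -> kb * e1 = e1 * kb -> ki * e1 = e1 * ki ->
  kb * T e e1 = v *: (T e e1 * kb) - eb * e1 * ki + w *: (e1 * eb * ki).
Proof.
move=> he h1 hk; have h1' : kb * e1 = 1 *: (e1 * kb) + 0 by rewrite addr0 scale1r.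
rewrite (LeibT he h1') /T; nrm.
rewrite -[eb * ki * e1]mulrA hk mulrA; lin.
Qed.

Lemma stepI (kb ki eb x x' e : A) :
  kb * e = e * kb -> ki * e = e * ki -> eb * e = e * eb ->
  kb * x = v *: (x * kb) - eb * x' * ki + w *: (x' * eb * ki) ->
  kb * T x e = v *: (T x e * kb) - eb * T x' e * ki + w *: (T x' e * eb * ki).
Proof.
move=> he hk hb hx; have he' : kb * e = 1 *: (e * kb) + 0 by rewrite addr0 scale1r.
have hx' : kb * x = v *: (x * kb) + (- (eb * x' * ki) + w *: (x' * eb * ki)).
  by rewrite hx addrA.
rewrite (LeibT hx' he') /T; nrm.
rewrite -[eb * x' * ki * e]mulrA hk mulrA -[x' * eb * ki * e]mulrA hk mulrA.
rewrite -[x' * eb * e]mulrA hb mulrA.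
rewrite -[e * eb]hb; lin.
Qed.

Lemma baseIb (kb ki e eb1 eb : A) :
  kb * e = v *: (e * kb) + eb * ki -> kb * eb1 = - (eb1 * kb) -> ki * eb1 = eb1 * ki ->
  kb * T e eb1 = - (v *: (T e eb1 * kb)) - eb * eb1 * ki - w *: (eb1 * eb * ki).
Proof.
move=> he h1 hk; have h1' : kb * eb1 = (-1) *: (eb1 * kb) + 0 by rewrite addr0 scaleN1r.
rewrite (LeibT he h1') /T; nrm.
rewrite -[eb * ki * eb1]mulrA hk mulrA; lin.
Qed.

Lemma stepIb (kb ki eb x x' e : A) :
  kb * e = - (e * kb) -> ki * e = e * ki -> eb * e = - (e * eb) ->
  kb * x = v *: (x * kb) - eb * x' * ki + w *: (x' * eb * ki) ->
  kb * T x e = - (v *: (T x e * kb)) - eb * T x' e * ki - w *: (T x' e * eb * ki).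
Proof.
move=> he hk hb hx; have he' : kb * e = (-1) *: (e * kb) + 0 by rewrite addr0 scaleN1r.
have hx' : kb * x = v *: (x * kb) + (- (eb * x' * ki) + w *: (x' * eb * ki)).
  by rewrite hx addrA.
rewrite (LeibT hx' he') /T; nrm.
rewrite -[eb * x' * ki * e]mulrA hk mulrA -[x' * eb * ki * e]mulrA hk mulrA.
rewrite -[x' * eb * e]mulrA hb mulrN mulrA.
have hb' : e * eb = - (eb * e) by rewrite hb opprK.
nrm; lin.
Qed.

Lemma stepM (kb ki x y e eb : A) :
  kb * x = w *: (x * kb) - y * ki -> kb * e = v *: (e * kb) + eb * ki ->
  ki * e = w *: (e * ki) -> ki * x = v *: (x * ki) ->
  x * eb - v *: (eb * x) = y * e - v *: (e * y) ->
  kb * T x e = T x e * kb.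
Proof.
move=> hx he hke hkx q.
have hx' : kb * x = w *: (x * kb) + - (y * ki) by [].
have q' : x * eb = y * e - v *: (e * y) + v *: (eb * x).
  by rewrite -q subrK.
rewrite (LeibT hx' he) /T; nrm.
rewrite -[eb * ki * x]mulrA hkx -[y * ki * e]mulrA hke q'; nrm; lin.
Qed.

Lemma stepMb (kb ki x y e eb : A) :
  kb * x = w *: (x * kb) - y * ki -> kb * eb = - (v *: (eb * kb)) + e * ki ->
  ki * eb = w *: (eb * ki) -> ki * x = v *: (x * ki) ->
  x * e - v *: (e * x) = y * eb + v *: (eb * y) ->
  kb * T x eb = - (T x eb * kb).
Proof.
move=> hx he hke hkx q.
have hx' : kb * x = w *: (x * kb) + - (y * ki) by [].
have he' : kb * eb = (- v) *: (eb * kb) + e * ki by rewrite scaleNr.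
have q' : x * e = y * eb + v *: (eb * y) + v *: (e * x).
  by rewrite -q subrK.
rewrite (LeibT hx' he') /T; nrm.
rewrite -[e * ki * x]mulrA hkx -[y * ki * eb]mulrA hke q'; nrm; lin.
Qed.

Lemma genstep (x p q r s : A) (c d : F) :
  x * r = r * x -> x * s = s * x -> p * r - c *: (r * p) = q * s - d *: (s * q) ->
  T x p * r - c *: (r * T x p) = T x q * s - d *: (s * T x q).
Proof.
move=> hr hs h.
have e1 : forall (p r : A) c, x * r = r * x ->
    T x p * r - c *: (r * T x p) = - (x * (p * r - c *: (r * p))) + w *: ((p * r - c *: (r * p)) * x).
  move=> p0 r0 c0 hr0; rewrite /T; nrm.
  rewrite -hr0 -[p0 * x * r0]mulrA hr0 !mulrA; lin.
by rewrite e1 // e1 // h.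
Qed.

Lemma Kinv (k ki x : A) (c : F) : c != 0 -> k * ki = 1 -> ki * k = 1 ->
  k * x = c *: (x * k) -> ki * x = c^-1 *: (x * ki).
Proof.
move=> c0 h1 h2 hx.
have e : x * k = c^-1 *: (k * x) by rewrite hx scalerA mulVf // scale1r.
rewrite -[ki * x]mulr1 -h1 mulrA -[ki * x * k]mulrA e -scalerAr -scalerAl.
by rewrite mulrA h2 mul1r.
Qed.

Lemma solveB4 (a b c : A) : v *: a = b - v *: c -> a = w *: b - c.
Proof.
move=> h; rewrite -[a]scale1r -(mulVf v0) -scalerA h scalerBr scalerA mulVf //.
by rewrite scale1r.
Qed.

Lemma solveB5 (a b c : A) : v *: a + b = v *: c -> a = - (w *: b) + c.
Proof.
move=> h; have h' : v *: a = v *: c - b by rewrite -h addrK.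
rewrite -[a]scale1r -(mulVf v0) -scalerA h' scalerBr scalerA mulVf //.
by rewrite scale1r addrC.
Qed.

End Gen.




Section Rel.
Variable A : algType Qv.
Variable n : nat.
Variables K Ki Kb E Eb F Fb : nat -> A.
Hypothesis H : qqn_rels n K Ki Kb E Eb F Fb.
Local Notation X := (Eroot E).
Local Notation Y := (Ebroot E Eb).
Local Notation v := qv.
Local Notation w := (qv^-1).

Lemma XS i k : X i k.+1 = T qv (X i k) (E (i + k.+1)). Proof. reflexivity. Qed.
Lemma YS i k : Y i k.+1 = T qv (X i k) (Eb (i + k.+1)). Proof. by case: i. Qed.
Lemma Y0 i : Y i 0 = Eb i. Proof. by case: i. Qed.

Lemma scommX (y : A) (c : Qv) i k :
  (forall m, (i <= m < i + k)%N -> y * E m = E m * y) ->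
  y * E (i + k) = c *: (E (i + k) * y) -> y * X i k = c *: (X i k * y).
Proof.
elim: k c => [|k IH] c hm hk; first by rewrite addn0 in hk.
rewrite XS -[c]mul1r; apply: G_comm => //.
apply: IH => [m hm'|]; first by apply: hm; lia.
by rewrite scale1r; apply: hm; lia.
Qed.

Lemma commX (y : A) i k :
  (forall m, (i <= m <= i + k)%N -> y * E m = E m * y) -> y * X i k = X i k * y.
Proof.
move=> hm; rewrite -[X i k * y]scale1r; apply: scommX => [m hm'|].
  by apply: hm; lia.
by rewrite scale1r; apply: hm; lia.
Qed.

Lemma scommY (y : A) (c : Qv) i k :
  (forall m, (i <= m < i + k)%N -> y * E m = E m * y) ->
  y * Eb (i + k) = c *: (Eb (i + k) * y) -> y * Y i k = c *: (Y i k * y).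
Proof.
case: k => [|k] hm hk; first by rewrite addn0 in hk; rewrite Y0.
rewrite YS -[c]mul1r; apply: G_comm => //.
by rewrite scale1r; apply: commX => m hm'; apply: hm; lia.
Qed.
Lemma KbE a m : (1 <= a <= n)%N -> (1 <= m <= n.-1)%N -> m != a -> m.+1 != a ->
  Kb a * E m = E m * Kb a.
Proof. by move=> h1 h2 h3 h4; case: (qq3_9 H h1 h2 h3 h4) => ->. Qed.

Lemma KbEb a m : (1 <= a <= n)%N -> (1 <= m <= n.-1)%N -> m != a -> m.+1 != a ->
  Kb a * Eb m = - (Eb m * Kb a).
Proof. by move=> h1 h2 h3 h4; case: (qq3_9 H h1 h2 h3 h4) => _ _ ->. Qed.

Lemma Kinv' a (x : A) (c : Qv) : (1 <= a <= n)%N -> c != 0 ->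
  K a * x = c *: (x * K a) -> Ki a * x = c^-1 *: (x * Ki a).
Proof. by move=> ha c0 hx; case: (qq1_inv H ha) => h1 h2; apply: (Kinv c0 h1 h2 hx). Qed.

Lemma epsal0 a m : a != m -> a != m.+1 -> epsal a m = 0.
Proof. by move=> h1 h2; rewrite /epsal (negbTE h1) (negbTE h2). Qed.

Lemma KiE0 a m : (1 <= a <= n)%N -> (1 <= m <= n.-1)%N -> a != m -> a != m.+1 ->
  Ki a * E m = E m * Ki a.
Proof.
move=> h1 h2 h3 h4; have := qq2_E H h1 h2; rewrite epsal0 // expr0z => hk.
by rewrite (Kinv' h1 (oner_neq0 _) hk) invr1 scale1r.
Qed.

Lemma KiEb0 a m : (1 <= a <= n)%N -> (1 <= m <= n.-1)%N -> a != m -> a != m.+1 ->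
  Ki a * Eb m = Eb m * Ki a.
Proof.
move=> h1 h2 h3 h4; have := qq2_Eb H h1 h2; rewrite epsal0 // expr0z => hk.
by rewrite (Kinv' h1 (oner_neq0 _) hk) invr1 scale1r.
Qed.

Lemma epsal1 a : epsal a a = 1.
Proof. by rewrite /epsal eqxx (ltn_eqF (ltnSn a)). Qed.

Lemma epsalm b : epsal b.+1 b = -1.
Proof. by rewrite /epsal eqxx (gtn_eqF (ltnSn b)). Qed.

Lemma KiE1 a : (1 <= a <= n.-1)%N -> Ki a * E a = w *: (E a * Ki a).
Proof.
move=> h; have h1 : (1 <= a <= n)%N by lia.
have := qq2_E H h1 h; rewrite epsal1 expr1z => hk.
exact: (Kinv' h1 qv_neq0 hk).
Qed.

Lemma KiEb1 a : (1 <= a <= n.-1)%N -> Ki a * Eb a = w *: (Eb a * Ki a).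
Proof.
move=> h; have h1 : (1 <= a <= n)%N by lia.
have := qq2_Eb H h1 h; rewrite epsal1 expr1z => hk.
exact: (Kinv' h1 qv_neq0 hk).
Qed.

Lemma KiEm a b : a = b.+1 -> (1 <= b)%N -> (a <= n)%N -> Ki a * E b = v *: (E b * Ki a).
Proof.
move=> -> h1 h2; have h1' : (1 <= b.+1 <= n)%N by lia.
have h2' : (1 <= b <= n.-1)%N by lia.
have := qq2_E H h1' h2'; rewrite epsalm exprN1 => hk.
by rewrite (Kinv' h1' _ hk) ?invrK // invr_eq0 qv_neq0.
Qed.

Lemma KiEbm a b : a = b.+1 -> (1 <= b)%N -> (a <= n)%N -> Ki a * Eb b = v *: (Eb b * Ki a).
Proof.
move=> -> h1 h2; have h1' : (1 <= b.+1 <= n)%N by lia.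
have h2' : (1 <= b <= n.-1)%N by lia.
have := qq2_Eb H h1' h2'; rewrite epsalm exprN1 => hk.
by rewrite (Kinv' h1' _ hk) ?invrK // invr_eq0 qv_neq0.
Qed.

Lemma B2 a : (1 <= a <= n.-1)%N -> Kb a * E a = v *: (E a * Kb a) + Eb a * Ki a.
Proof. by move=> h; rewrite -(qq3_1 H h) addrC subrK. Qed.

Lemma B3 a : (1 <= a <= n.-1)%N -> Kb a * Eb a = - (v *: (Eb a * Kb a)) + E a * Ki a.
Proof. by move=> h; rewrite -(qq3_5 H h) addrC addrK. Qed.

Lemma B4 a b : a = b.+1 -> (1 <= b)%N -> (a <= n)%N ->
  Kb a * E b = w *: (E b * Kb a) - Eb b * Ki a.
Proof.
move=> e h1 h2; apply: (solveB4 qv_neq0).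
have h : (2 <= a <= n)%N by lia.
have := qq3_2 H h; rewrite e /= (KiEbm (erefl _)) //; last by rewrite -e.
by move=> h'; rewrite -(subrK (E b * Kb b.+1) (qv *: _)) h' addrC.
Qed.

Lemma B5 a b : a = b.+1 -> (1 <= b)%N -> (a <= n)%N ->
  Kb a * Eb b = - (w *: (Eb b * Kb a)) + E b * Ki a.
Proof.
move=> e h1 h2; apply: (solveB5 qv_neq0).
have h : (2 <= a <= n)%N by lia.
have := qq3_6 H h; rewrite e /= (KiEm (erefl _)) //; by rewrite -e.
Qed.

Lemma EbEfar i m : (1 <= i <= n.-1)%N -> (1 <= m <= n.-1)%N -> (i.+1 < m)%N ->
  Eb i * E m = E m * Eb i.
Proof.
move=> h1 h2 h3; have [] := qq5_EEb H h2 h1 _ _; [lia|lia|by move=> ->].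
Qed.

Lemma EbEbfar i m : (1 <= i <= n.-1)%N -> (1 <= m <= n.-1)%N -> (i.+1 < m)%N ->
  Eb i * Eb m = - (Eb m * Eb i).
Proof.
move=> h1 h2 h3; have h : (i.+1 < m)%N || (m.+1 < i)%N by rewrite h3.
by case: (qq5_far H h1 h2 h) => _ _ ->.
Qed.

Lemma EEfar i m : (1 <= i <= n.-1)%N -> (1 <= m <= n.-1)%N -> (i.+1 < m)%N ->
  E i * E m = E m * E i.
Proof.
move=> h1 h2 h3; have h : (i.+1 < m)%N || (m.+1 < i)%N by rewrite h3.
by case: (qq5_far H h1 h2 h) => ->.
Qed.

Lemma EEb_gen i j : (1 <= i <= n.-1)%N -> (1 <= j <= n.-1)%N -> i != j.+1 -> j != i.+1 ->
  E i * Eb j = Eb j * E i.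
Proof. by move=> h1 h2 h3 h4; case: (qq5_EEb H h1 h2 h3 h4). Qed.

Lemma EEbfar i m : (1 <= i <= n.-1)%N -> (1 <= m <= n.-1)%N -> (i.+1 < m)%N ->
  E m * Eb i = Eb i * E m.
Proof. by move=> h1 h2 h3; rewrite (EbEfar h1 h2 h3). Qed.

Lemma caseOut i k a : (1 <= i)%N -> (i + k.+1 <= n)%N -> (1 <= a <= n)%N ->
  (a < i)%N \/ (i + k.+1 < a)%N ->
  Kb a * X i k = X i k * Kb a /\ Kb a * Y i k = - (Y i k * Kb a).
Proof.
move=> hi hn ha hor; split.
  by apply: commX => m hm; apply: KbE; lia.
rewrite -scaleN1r; apply: scommY => [m hm|].
  by apply: KbE; lia.
by rewrite scaleN1r; apply: KbEb; lia.
Qed.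

Lemma caseJ i k a : a = i + k.+1 -> (1 <= i)%N -> (a <= n)%N ->
  Kb a * X i k = w *: (X i k * Kb a) - Y i k * Ki a /\
  Kb a * Y i k = - (w *: (Y i k * Kb a)) + X i k * Ki a.
Proof.
case: k => [|k] ha hi hn.
  by rewrite Y0; split; [apply: B4 | apply: B5] => //; lia.
rewrite XS YS.
have hx : Kb a * X i k = X i k * Kb a by apply: commX => m hm; apply: KbE; lia.
have hk : Ki a * X i k = X i k * Ki a by apply: commX => m hm; apply: KiE0; lia.
by split; [apply: stepJ | apply: stepJb] => //; [apply: B4 | apply: B5]; lia.
Qed.

Lemma caseI i k : (1 <= i)%N -> (i + k.+2 <= n)%N ->
  Kb i * X i k.+1 = v *: (X i k.+1 * Kb i) - Eb i * X i.+1 k * Ki i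
                    + w *: (X i.+1 k * Eb i * Ki i).
Proof.
elim: k => [|k IH] hi hn.
  rewrite XS /= addn1; apply: baseI; [apply: B2 | apply: KbE | apply: KiE0]; lia.
rewrite XS [X i.+1 k.+1]XS addSnnS; apply: stepI.
- by apply: KbE; lia.
- by apply: KiE0; lia.
- by apply: EbEfar; lia.
- by apply: IH; lia.
Qed.

Lemma caseIb i k : (1 <= i)%N -> (i + k.+2 <= n)%N ->
  Kb i * Y i k.+1 = - (v *: (Y i k.+1 * Kb i)) - Eb i * Y i.+1 k * Ki i
                    - w *: (Y i.+1 k * Eb i * Ki i).
Proof.
case: k => [|k] hi hn.
  rewrite YS Y0 /= addn1; apply: baseIb; [apply: B2 | apply: KbEb | apply: KiEb0]; lia.
rewrite YS [Y i.+1 k.+1]YS addSnnS; apply: stepIb.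
- by apply: KbEb; lia.
- by apply: KiEb0; lia.
- by apply: EbEbfar; lia.
- by apply: caseI; lia.
Qed.

Lemma g52 i k a : a = (i + k).+1 -> (1 <= i)%N -> (a <= n.-1)%N ->
  X i k * Eb a - v *: (Eb a * X i k) = Y i k * E a - v *: (E a * Y i k).
Proof.
case: k => [|k] ha hi hn.
  rewrite Y0 /= ha addn0; apply: (qq5_2 H) => //; lia.
rewrite XS YS.
have e : a = (i + k.+1).+1%N by lia.
rewrite e; apply: genstep.
- by symmetry; apply: commX => m hm; rewrite (EEb_gen (i:=m)) //; lia.
- by symmetry; apply: commX => m hm; rewrite (EEfar (i:=m)) //; lia.
- by apply: (qq5_2 H); lia.
Qed.

Lemma g51 i k a : a = (i + k).+1 -> (1 <= i)%N -> (a <= n.-1)%N ->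
  X i k * E a - v *: (E a * X i k) = Y i k * Eb a + v *: (Eb a * Y i k).
Proof.
rewrite -[v *: (Eb a * _)]opprK -[- (v *: (Eb a * _))]scaleNr.
case: k => [|k] ha hi hn.
  rewrite Y0 /= ha addn0 scaleNr opprK; apply: (qq5_1 H) => //; lia.
rewrite XS YS.
have e : a = (i + k.+1).+1%N by lia.
rewrite e; apply: genstep.
- by symmetry; apply: commX => m hm; rewrite (EEfar (i:=m)) //; lia.
- by symmetry; apply: commX => m hm; rewrite (EEb_gen (i:=m)) //; lia.
- by rewrite scaleNr opprK; apply: (qq5_1 H); lia.
Qed.

Lemma KiX i k a : a = (i + k).+1 -> (1 <= i)%N -> (a <= n)%N ->
  Ki a * X i k = v *: (X i k * Ki a).
Proof.
move=> ha hi hn; apply: scommX => [m hm|].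
  by apply: KiE0; lia.
by apply: KiEm; lia.
Qed.

Lemma caseM i k a : (1 <= i)%N -> (i + k.+1 <= n)%N -> (i < a < i + k.+1)%N ->
  Kb a * X i k = X i k * Kb a /\ Kb a * Y i k = - (Y i k * Kb a).
Proof.
elim: k a => [|k IH] a hi hn ha; first by lia.
rewrite XS YS; case: (ltnP a (i + k.+1)) => h.
  have [h1 h2] := IH a hi (ltac:(lia)) (ltac:(lia)).
  split.
    rewrite -[T _ _ _ * _]scale1r -[1]mul1r; apply: G_comm.
      by rewrite scale1r.
    by rewrite scale1r; apply: KbE; lia.
  rewrite -scaleN1r -[-1]mul1r; apply: G_comm.
    by rewrite scale1r.
  by rewrite scaleN1r; apply: KbEb; lia.
have e : a = (i + k.+1)%N by lia.
have [j1 j2] := caseJ e hi (ltac:(lia)).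
rewrite -e; split.
  apply: (@stepM _ _ qv_neq0 _ (Kb a) (Ki a) (X i k) (Y i k) (E a) (Eb a)) => //.
  - by apply: B2; lia.
  - by apply: KiE1; lia.
  - by apply: KiX; lia.
  - by apply: g52; lia.
apply: (@stepMb _ _ qv_neq0 _ (Kb a) (Ki a) (X i k) (Y i k) (E a) (Eb a)) => //.
- by apply: B3; lia.
- by apply: KiEb1; lia.
- by apply: KiX; lia.
- by apply: g51; lia.
Qed.

End Rel.




Unset Implicit Arguments.
Theorem lemma2p7 (A : algType Qv) (n : nat) (K Ki Kb E Eb F Fb : nat -> A) :
  qqn_rels n K Ki Kb E Eb F Fb ->
  forall i j a : nat, (1 <= i)%N -> (i < j)%N -> (j <= n)%N -> (1 <= a <= n)%N ->
  let Eij := Eij E in let Ebij := Ebij E Eb in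
  [/\ ((a < i)%N \/ (i < a < j)%N \/ (j < a)%N ->
         Kb a * Eij i j = Eij i j * Kb a),
      (a = i -> (i.+1 < j)%N ->
         Kb a * Eij i j = qv *: (Eij i j * Kb i) - Eb i * Eij i.+1 j * Ki i
                          + qv^-1 *: (Eij i.+1 j * Eb i * Ki i)) &
      (a = j ->
         Kb a * Eij i j = qv^-1 *: (Eij i j * Kb j) - Ebij i j * Ki j)] /\
  [/\ ((a < i)%N \/ (i < a < j)%N \/ (j < a)%N ->
         Kb a * Ebij i j = - (Ebij i j * Kb a)),
      (a = i -> (i.+1 < j)%N ->
         Kb a * Ebij i j = - (qv *: (Ebij i j * Kb i)) - Eb i * Ebij i.+1 j * Ki i
                           - qv^-1 *: (Ebij i.+1 j * Eb i * Ki i)) &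
      (a = j ->
         Kb a * Ebij i j = - (qv^-1 *: (Ebij i j * Kb j)) + Eij i j * Ki j)].
Proof.
move=> H i j a hi hij hjn ha; cbv zeta.
have [k ek] : exists k, j = (i + k.+1)%N by exists (j - i).-1; lia.
subst j.
have eX : Eij E i (i + k.+1) = Eroot E i k by rewrite /Eij; congr Eroot; lia.
have eY : Ebij E Eb i (i + k.+1) = Ebroot E Eb i k by rewrite /Ebij; congr Ebroot; lia.
rewrite eX eY.
have hI : forall k', k = k'.+1 ->
  Eij E i.+1 (i + k.+1) = Eroot E i.+1 k' /\ Ebij E Eb i.+1 (i + k.+1) = Ebroot E Eb i.+1 k'.
  by move=> k' ->; rewrite /Eij /Ebij; split; [congr Eroot | congr Ebroot]; lia.
split; split.
- move=> [h|[h|h]].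
  + by case: (caseOut H hi hjn ha (or_introl h)).
  + by case: (caseM H hi hjn h).
  + by case: (caseOut H hi hjn ha (or_intror h)).
- move=> ea hk; subst a; case: k hk eX eY hI hjn hij => [|k] hk; first by lia.
  move=> _ _ hI hjn _; case: (hI k erefl) => -> _.
  by apply: (caseI H hi).
- by move=> ea; case: (caseJ H ea hi (ltac:(lia))); rewrite ea.
- move=> [h|[h|h]].
  + by case: (caseOut H hi hjn ha (or_introl h)).
  + by case: (caseM H hi hjn h).
  + by case: (caseOut H hi hjn ha (or_intror h)).
- move=> ea hk; subst a; case: k hk eX eY hI hjn hij => [|k] hk; first by lia.
  move=> _ _ hI hjn _; case: (hI k erefl) => _ ->.
  by apply: (caseIb H hi).
- by move=> ea; case: (caseJ H ea hi (ltac:(lia))); rewrite ea.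
Qed.
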